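(* Let $\Pi_1,\Pi_2$ be fixed subspaces of $\mathbb{F}_q^n$ with $\dim\Pi_1=d_1$, $\dim\Pi_2=d_2$ and $\dim(\Pi_1\cap\Pi_2)=d_{12}$. Let $\hat\Pi_1$ be the span of $m_1$ vectors chosen independently and uniformly at random from $\Pi_1$, and $\hat\Pi_2$ the span of $m_2$ vectors chosen independently and uniformly at random from $\Pi_2$ (all $m_1+m_2$ draws mutually independent). Then, with probability $1-O(q^{-1})$, \[ \dim(\hat\Pi_1\cap\hat\Pi_2)=\min\Big[d_{12},\ \big(m_1+m_2-(d_1+d_2-d_{12})\big)^+,\ \big(m_1-(d_1-d_{12})\big)^+,\ \big(m_2-(d_2-d_{12})\big)^+\Big]. \]
   Context: $x^+=\max(x,0)$. $O(\cdot)$ refers to $q\to\infty$ with $n,d_1,d_2,d_{12},m_1,m_2$ fixed. *)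

(* Defs.v *)
From HB Require Import structures.
From mathcomp Require Import all_boot all_order all_algebra all_field.
Set Implicit Arguments. Unset Strict Implicit. Unset Printing Implicit Defensive.
Import Order.TTheory GRing.Theory Num.Theory.

(* Subspaces of F^n are represented as row spaces of n x n matrices
   (mxalgebra); dim = \rank.  A draw of m vectors from Pi is a matrix
   X : 'M_(m,n) whose rows all lie in Pi, i.e. (X <= Pi)%MS; its span is
   the row space of X.  Uniform independent draws = uniform measure on
   such pairs of matrices. *)

(* min[d12, (m1+m2-(d1+d2-d12))^+, (m1-(d1-d12))^+, (m2-(d2-d12))^+];
   nat truncated subtraction implements x^+ (note d12 <= d1, d2). *)
Definition expected_dim (d1 d2 d12 m1 m2 : nat) : nat :=
  minn d12 (minn (m1 + m2 - (d1 + d2 - d12))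
                 (minn (m1 - (d1 - d12)) (m2 - (d2 - d12)))).

Definition fail_prob (F : finFieldType) (n m1 m2 : nat) (P1 P2 : 'M[F]_n)
  (k : nat) : rat :=
  (#|[set X : 'M[F]_(m1, n) * 'M[F]_(m2, n) |
       [&& (X.1 <= P1)%MS, (X.2 <= P2)%MS & \rank (X.1 :&: X.2)%MS != k]]|%:R
   / (#|[set X : 'M[F]_(m1, n) | (X <= P1)%MS]|
      * #|[set Y : 'M[F]_(m2, n) | (Y <= P2)%MS]|)%:R)%R.

(* Main.v *)
Require Import Defs.
From HB Require Import structures.
From mathcomp Require Import all_boot all_order all_algebra all_field.
From mathcomp Require Import zify.
Set Implicit Arguments. Unset Strict Implicit. Unset Printing Implicit Defensive.
Import Order.TTheory GRing.Theory Num.Theory.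
Local Open Scope ring_scope.

Lemma card_sum_ind (T : finType) (Q : pred T) :
  #|[set x | Q x]| = (\sum_x (Q x : nat))%N.
Proof.
rewrite -sum1_card big_mkcond /=; apply: eq_bigr => x _; rewrite inE.
by case: (Q x).
Qed.

Lemma card_pairs (A B : finType) (Q : A -> B -> bool) :
  #|[set pr : A * B | Q pr.1 pr.2]| = (\sum_(b : B) #|[set a | Q a b]|)%N.
Proof.
rewrite card_sum_ind -(pair_big predT predT (fun a b => (Q a b : nat))) /=.
rewrite exchange_big; apply: eq_bigr => b _; by rewrite card_sum_ind.
Qed.

Section S.
Variables (F : finFieldType) (n : nat).

Lemma card_split k (P : pred 'M[F]_(1 + k, n)) :
  #|[set X : 'M[F]_(1 + k, n) | P X]|
    = (\sum_(X' : 'M[F]_(k, n)) #|[set x : 'rV[F]_n | P (col_mx x X')]|)%N.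
Proof.
rewrite -(card_pairs (fun (x : 'rV[F]_n) (X' : 'M[F]_(k,n)) => P (col_mx x X'))).
pose g := fun pr : 'rV[F]_n * 'M[F]_(k, n) => col_mx pr.1 pr.2.
have ginj : injective g.
  move=> [a b] [c d]; rewrite /g /= => /eq_col_mx [-> ->] //.
rewrite -(card_imset _ ginj); apply: eq_card => X; rewrite inE.
apply/idP/imsetP => [PX | [[a b]]].
  exists (usubmx X, dsubmx X); first by rewrite inE /= vsubmxK.
  by rewrite /g /= vsubmxK.
by rewrite inE /= => Pab ->.
Qed.
Lemma transl_bound p1 p2 (T : 'M[F]_(p1, n)) (V : 'M[F]_(p2, n)) :
  ~~ (V <= T)%MS ->
  (#|[set x : 'rV[F]_n | (x <= V)%MS && (x <= T)%MS]| * #|F|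
     <= #|[set x : 'rV[F]_n | (x <= V)%MS]|)%N.
Proof.
move=> nVT.
have [i Hi] : exists i, ~~ (row i V <= T)%MS.
  apply/existsP; apply: contraR nVT => /existsPn H; apply/row_subP => i.
  by move: (H i); rewrite negbK.
set z := row i V.
set A := [set x : 'rV[F]_n | (x <= V)%MS && (x <= T)%MS].
pose h := fun pr : F * 'rV[F]_n => pr.2 + pr.1 *: z.
have hinj : {in setX [set: F] A &, injective h}.
  move=> [c t] [c' t'] /setXP [_ Ht] /setXP [_ Ht'] /=; rewrite /h /= => E.
  rewrite !inE in Ht Ht'; move/andP: Ht => [_ Ht]; move/andP: Ht' => [_ Ht'].
  have E2 : (c - c') *: z = t' - t.
    have Ec : c *: z = t' + c' *: z - t by rewrite -E addrAC subrr add0r.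
    by rewrite scalerBl Ec addrAC addrK.
  have Hc : c = c'.
    apply/eqP; apply: contraR Hi => Hne; rewrite -/z.
    have -> : z = (c - c')^-1 *: ((c - c') *: z).
      by rewrite scalerA mulVf ?scale1r // subr_eq0.
    by rewrite E2; apply: scalemx_sub; apply: addmx_sub => //; rewrite -scaleN1r; apply: scalemx_sub.
  by move: E; rewrite Hc => /addIr ->.
rewrite mulnC -cardsT -cardsX -(card_in_imset hinj).
apply: subset_leq_card; apply/subsetP => y /imsetP [[c t] /setXP [_ Ht] ->].
rewrite !inE in Ht *; move/andP: Ht => [Ht _].
by apply: addmx_sub => //; apply: scalemx_sub; apply: row_sub.
Qed.

Local Close Scope ring_scope.
Lemma bad_bound p p2 (U : 'M[F]_(p, n)) (V : 'M[F]_(p2, n)) k :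
  (#|[set X : 'M[F]_(k, n) | (X <= V)%MS &&
      (\rank (U + X)%MS < minn (\rank U + k) (\rank (U + V)%MS))]| * #|F|
   <= k * #|[set X : 'M[F]_(k, n) | (X <= V)%MS]|)%N.
Proof.
set rU := \rank U; set rUV := \rank (U + V)%MS.
set NV := #|[set x : 'rV[F]_n | (x <= V)%MS]|.
elim: k => [|k IH].
  rewrite mul0n leqn0 muln_eq0; apply/orP; left.
  rewrite cards_eq0; apply/eqP/setP => X; rewrite !inE.
  have := mxrankS (addsmxSl U X); rewrite -/rU => h.
  apply/negbTE; rewrite negb_and -leqNgt; apply/orP; right.
  lia.
set Nk := #|[set X : 'M[F]_(k, n) | (X <= V)%MS]|.
set Bk := #|[set X : 'M[F]_(k, n) | (X <= V)%MS && (\rank (U + X)%MS < minn (rU + k) rUV)]|.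
have step : forall X' : 'M[F]_(k, n),
  (#|[set x : 'rV[F]_n | ((col_mx x X' : 'M[F]_(k.+1, n)) <= V)%MS &&
      (\rank (U + (col_mx x X' : 'M[F]_(k.+1, n)))%MS < minn (rU + k.+1) rUV)]| * #|F|
   <= #|F| * NV * ((X' <= V)%MS && (\rank (U + X')%MS < minn (rU + k) rUV))
      + NV * (X' <= V)%MS)%N.
  move=> X'.
  have E : forall x : 'rV[F]_n, ((col_mx x X' : 'M[F]_(k.+1, n)) <= V)%MS
       = (x <= V)%MS && (X' <= V)%MS := fun x => col_mx_sub x X' V.
  case hV: (X' <= V)%MS; last first.
    rewrite andFb /= !muln0 addn0 leqn0 muln_eq0 cards_eq0; apply/orP; left.
    apply/eqP/setP => x; rewrite !inE E hV andbF; done.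
  rewrite andTb muln1.
  set r' := \rank (U + X')%MS.
  have hr' : (rU <= r')%N by apply: mxrankS; apply: addsmxSl.
  have subB : forall x : 'rV[F]_n, (U + X' <= U + (col_mx x X' : 'M[F]_(k.+1, n)))%MS /\ (x <= U + (col_mx x X' : 'M[F]_(k.+1, n)))%MS.
    move=> x; have := submx_refl (col_mx x X'); rewrite col_mx_sub => /andP [h1 h2].
    have h3 := addsmxSr U (col_mx x X' : 'M[F]_(k.+1, n)).
    split; last exact: submx_trans h1 h3.
    by rewrite addsmx_sub addsmxSl (submx_trans h2 h3).
  case hb: (r' < minn (rU + k) rUV)%N.
    rewrite muln1; apply: leq_trans (leq_addr _ _); rewrite mulnC leq_pmul2l //.
      apply: subset_leq_card; apply/subsetP => x; rewrite !inE E.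
      by case/andP => /andP [-> _].
    by apply/card_gt0P; exists 0%R.
  rewrite muln0 add0n.
  case hVs: (V <= U + X')%MS.
    have hle : (rUV <= r')%N by apply: mxrankS; rewrite addsmx_sub addsmxSl hVs.
    apply: leq_trans (leq0n _); rewrite leqn0 muln_eq0 cards_eq0; apply/orP; left.
    apply/eqP/setP => x; rewrite !inE; apply/negbTE; rewrite negb_and -leqNgt.
    apply/orP; right; have := mxrankS (proj1 (subB x)); rewrite -/r'.
    move=> h; rewrite geq_min; apply/orP; right; exact: leq_trans hle h.
  apply: leq_trans (transl_bound (T := (U + X')%MS) (negbT hVs)).
  rewrite leq_mul2r; apply/orP; right.
  apply: subset_leq_card; apply/subsetP => x; rewrite !inE E hV andbT.
  case/andP => -> hlt /=; apply: contraLR hlt => hx.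
  rewrite -leqNgt.
  have : (U + X' < U + (col_mx x X' : 'M[F]_(k.+1, n)))%MS.
    rewrite ltmxE (proj1 (subB x)) /=; apply: contra hx => h.
    exact: submx_trans (proj2 (subB x)) h.
  rewrite ltmxErank => /andP [_]; rewrite -/r' => h.
  move/negbT: hb; rewrite -leqNgt geq_min => hb.
  rewrite geq_min; case/orP: hb => hb; apply/orP.
    by left; rewrite addnS; apply: leq_trans h; rewrite ltnS.
  by right; apply: leq_trans h; exact: leq_trans hb (leqnSn _).
have NE : forall X' : 'M[F]_(k, n),
    #|[set x : 'rV[F]_n | ((col_mx x X' : 'M[F]_(k.+1, n)) <= V)%MS]| = NV * (X' <= V)%MS.
  move=> X'.
  have E : forall x : 'rV[F]_n, ((col_mx x X' : 'M[F]_(k.+1, n)) <= V)%MS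
       = (x <= V)%MS && (X' <= V)%MS := fun x => col_mx_sub x X' V.
  case hV: (X' <= V)%MS => /=; last first.
    rewrite muln0; apply/eqP; rewrite cards_eq0; apply/eqP/setP => x.
    by rewrite !inE E hV andbF.
  rewrite muln1; apply: eq_card => x; by rewrite !inE E hV andbT.
rewrite card_sum_ind in IH; rewrite /Nk card_sum_ind in IH.
rewrite !card_split.
rewrite [X in (_ <= _ * X)%N](eq_bigr (fun X' => NV * (X' <= V)%MS)); last by move=> X' _; exact: NE X'.
rewrite big_distrl /=.
have SS := @leq_sum _ (index_enum _) xpredT _ _ (fun (X' : 'M[F]_(k, n)) (_ : true) => step X').
apply: leq_trans SS _.
rewrite big_split /= -!big_distrr /= -!mulnA.
move: IH; set B := \sum_(i : 'M[F]_(k, n)) _; set N := \sum_(i : 'M[F]_(k, n)) _ => IH.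
rewrite mulSn [X in (X <= _)%N]addnC leq_add2l mulnCA [X in (_ <= X)%N]mulnCA.
rewrite leq_mul2l; apply/orP; right; by rewrite mulnC.
Qed.

Lemma card_pairs1 (A B : finType) (Q : A -> B -> bool) :
  #|[set pr : A * B | Q pr.1 pr.2]| = (\sum_(a : A) #|[set b | Q a b]|)%N.
Proof.
rewrite card_sum_ind -(pair_big predT predT (fun a b => (Q a b : nat))) /=.
apply: eq_bigr => a _; by rewrite card_sum_ind.
Qed.

Lemma rank_upper p p2 (U : 'M[F]_(p, n)) (V : 'M[F]_(p2, n)) k (X : 'M[F]_(k, n)) :
  (X <= V)%MS -> (\rank (U + X)%MS <= minn (\rank U + k) (\rank (U + V)%MS))%N.
Proof.
move=> hX; rewrite leq_min; apply/andP; split.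
  apply: leq_trans (mxrank_adds_leqif U X).1 _.
  by rewrite leq_add2l rank_leq_row.
by apply: mxrankS; apply: addsmxS => //; apply: submx_refl.
Qed.

Lemma rank0add k (X : 'M[F]_(k, n)) : \rank ((0%R : 'M[F]_(1, n)) + X)%MS = \rank X.
Proof. by rewrite adds0mx. Qed.

Lemma cap_arith (r1 r2 rs rc a rp21 rp12 rx1p2 d1 d2 d12 m1 m2 : nat) :
  (minn (0 + m1) d1 <= r1)%N -> (r1 <= minn (0 + m1) d1)%N ->
  (minn (d2 + m1) rp21 <= a)%N -> (a <= minn (d2 + m1) rp21)%N ->
  (minn (0 + m2) d2 <= r2)%N -> (r2 <= minn (0 + m2) d2)%N ->
  (minn (r1 + m2) rx1p2 <= rs)%N -> (rs <= minn (r1 + m2) rx1p2)%N ->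
  (rs + rc = r1 + r2)%N -> (rp12 + d12 = d1 + d2)%N -> rp21 = rp12 -> rx1p2 = a ->
  (d12 <= d1)%N -> (d12 <= d2)%N ->
  rc = expected_dim d1 d2 d12 m1 m2.
Proof.
rewrite !add0n => h1 h1' h2 h2' h3 h3' h4 h4' c1 c2 e1 e2 l1 l2.
have E1 : r1 = minn m1 d1 by apply/eqP; rewrite eqn_leq h1 h1'.
have E2 : a = minn (d2 + m1) rp21 by apply/eqP; rewrite eqn_leq h2 h2'.
have E3 : r2 = minn m2 d2 by apply/eqP; rewrite eqn_leq h3 h3'.
have E4 : rs = minn (r1 + m2) rx1p2 by apply/eqP; rewrite eqn_leq h4 h4'.
have Erc : rc = r1 + r2 - rs by rewrite -c1 addKn.
have ED : rp12 = d1 + d2 - d12 by rewrite -c2 addnK.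
rewrite Erc E4 e2 E2 e1 ED E3 E1 /expected_dim.
set D := d1 + d2 - d12.
set u := minn m1 d1.
have sa : minn (u + m2) (minn (d2 + m1) D) = minn (u + minn m2 d2) D.
  rewrite addn_minr /u [minn m1 d1 + d2]addn_minl -/u -!minnA.
  congr (minn _ _); rewrite addnC; congr (minn _ _).
  by apply/esym/minn_idPr; rewrite /D leq_subr.
rewrite sa (minnE (u + minn m2 d2) D) subKn ?leq_subr // /u addn_minl !addn_minr !subn_minl.
have i1 : m1 + d2 - D = m1 - (d1 - d12) by rewrite /D -(addnBAC _ l1) subnDr.
have i2 : d1 + m2 - D = m2 - (d2 - d12) by rewrite /D -(addnBA _ l2) subnDl.
have i3 : d1 + d2 - D = d12 by rewrite /D subKn // (leq_trans l1 (leq_addr _ _)).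
rewrite i1 i2 i3.
by rewrite -minnA (minnCA d12) (minnCA d12) (minnC d12).
Qed.

Lemma fin_arith (B e1 e2 e3 e4 s1 s2 q m1 m2 : nat) :
  (B * q <= (e1 * s2 + e2 * s2 + (s1 * e3 + e4)) * q)%N ->
  (e1 * q * s2 <= m1 * s1 * s2)%N -> (e2 * q * s2 <= m1 * s1 * s2)%N ->
  (e3 * q * s1 <= m2 * s2 * s1)%N -> (e4 * q <= m2 * s2 * s1)%N ->
  (B * q <= 2 * (m1 + m2) * (s1 * s2))%N.
Proof.
move=> h0 h1 h2 h3 h4; apply: leq_trans h0 _.
have E : (2 * (m1 + m2) * (s1 * s2)
   = m1 * s1 * s2 + m1 * s1 * s2 + (m2 * s2 * s1 + m2 * s2 * s1))%N.
  rewrite mul2n -addnn !mulnDl -!mulnA (mulnC s2 s1).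
  by rewrite addnACA.
rewrite E !mulnDl; apply: leq_add; first apply: leq_add.
- by rewrite mulnAC.
- by rewrite mulnAC.
apply: leq_add => //.
by rewrite (mulnC s1) mulnAC.
Qed.

Definition BB p p2 (U : 'M[F]_(p, n)) (V : 'M[F]_(p2, n)) k :=
  [set X : 'M[F]_(k, n) | (X <= V)%MS &&
      (\rank (U + X)%MS < minn (\rank U + k) (\rank (U + V)%MS))].

Lemma main_count m1 m2 (P1 P2 : 'M[F]_n) :
  (#|[set X : 'M[F]_(m1, n) * 'M[F]_(m2, n) |
       [&& (X.1 <= P1)%MS, (X.2 <= P2)%MS & \rank (X.1 :&: X.2)%MS !=
           expected_dim (\rank P1) (\rank P2) (\rank (P1 :&: P2)%MS) m1 m2]]| * #|F|
   <= (2 * (m1 + m2)) * (#|[set X : 'M[F]_(m1, n) | (X <= P1)%MS]|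
                          * #|[set Y : 'M[F]_(m2, n) | (Y <= P2)%MS]|))%N.
Proof.
set S1 := [set X : 'M[F]_(m1, n) | (X <= P1)%MS].
set S2 := [set X : 'M[F]_(m2, n) | (X <= P2)%MS].
set E1 := BB (0%R : 'M[F]_(1, n)) P1 m1.
set E2 := BB P2 P1 m1.
set E3 := BB (0%R : 'M[F]_(1, n)) P2 m2.
set E4 := [set pr : 'M[F]_(m1, n) * 'M[F]_(m2, n) | (pr.1 \in S1) && (pr.2 \in BB pr.1 P2 m2)].
set Bad := [set X : 'M[F]_(m1, n) * 'M[F]_(m2, n) | _].
have sub : Bad \subset (setX E1 S2 :|: setX E2 S2) :|: (setX S1 E3 :|: E4).
  apply/subsetP => [[X1 X2]]; rewrite !inE /= => /and3P [h1 h2 hk].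
  rewrite h1 h2 /=.
  apply: contraLR hk => hn; rewrite negbK; apply/eqP.
  have u1 := rank_upper (0%R : 'M[F]_(1, n)) h1.
  have u2 := rank_upper P2 h1.
  have u3 := rank_upper (0%R : 'M[F]_(1, n)) h2.
  have u4 := rank_upper X1 h2.
  rewrite !rank0add mxrank0 in hn u1 u3.
  have c1 := mxrank_sum_cap X1 X2.
  have c2 := mxrank_sum_cap P1 P2.
  have e1 : \rank (P2 + P1)%MS = \rank (P1 + P2)%MS by rewrite addsmxC.
  have e2 : \rank (X1 + P2)%MS = \rank (P2 + X1)%MS by rewrite addsmxC.
  have l1 : (\rank (P1 :&: P2)%MS <= \rank P1)%N by apply: mxrankS; apply: capmxSl.
  have l2 : (\rank (P1 :&: P2)%MS <= \rank P2)%N by apply: mxrankS; apply: capmxSr.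
  move: hn; rewrite !negb_or -!leqNgt => H.
  case/and3P: H => /and3P [/andP [n1 _] n2 _] n3 n4.
  exact: (cap_arith n1 u1 n2 u2 n3 u3 n4 u4 c1 c2 e1 e2 l1 l2).
have c0 := subset_leq_card sub.
have cU1 := (leq_card_setU (setX E1 S2 :|: setX E2 S2) (setX S1 E3 :|: E4)).1.
have cU2 := (leq_card_setU (setX E1 S2) (setX E2 S2)).1.
have cU3 := (leq_card_setU (setX S1 E3) E4).1.
rewrite !cardsX in cU2 cU3.
have b1 := bad_bound (0%R : 'M[F]_(1, n)) P1 m1.
have b2 := bad_bound P2 P1 m1.
have b3 := bad_bound (0%R : 'M[F]_(1, n)) P2 m2.
rewrite -/(BB _ _ _) -/E1 -/S1 in b1.
rewrite -/(BB _ _ _) -/E2 -/S1 in b2.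
rewrite -/(BB _ _ _) -/E3 -/S2 in b3.
have b4 : (#|E4| * #|F| <= m2 * #|S2| * #|S1|)%N.
  rewrite /E4 (card_pairs1 (fun a b => (a \in S1) && (b \in BB a P2 m2))) big_distrl /= [X in (_ <= _ * X)%N]card_sum_ind big_distrr /=.
  apply: leq_sum => a _.
  case ha: (a <= P1)%MS; last first.
    rewrite muln0 leqn0 muln_eq0 cards_eq0; apply/orP; left; apply/eqP/setP => b.
    by rewrite !inE ha.
  rewrite muln1.
  have -> : [set b | (a \in S1) && (b \in BB a P2 m2)] = BB a P2 m2.
    by apply/setP => b; rewrite !inE ha.
  exact: bad_bound a P2 m2.
have f1 := leq_mul b1 (leqnn #|S2|).
have f2 := leq_mul b2 (leqnn #|S2|).
have f3 := leq_mul b3 (leqnn #|S1|).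
have f0 := leq_mul (leq_trans c0 (leq_trans cU1 (leq_add cU2 cU3))) (leqnn #|F|).
exact: (fin_arith f0 f1 f2 f3 b4).
Qed.
End S.

Unset Implicit Arguments.
Theorem corollary2 (n d1 d2 d12 m1 m2 : nat) :
  exists (C : rat) (q0 : nat),
    forall (F : finFieldType) (P1 P2 : 'M[F]_n),
      \rank P1 = d1 -> \rank P2 = d2 -> \rank (P1 :&: P2)%MS = d12 ->
      (q0 <= #|F|)%N ->
      (fail_prob m1 m2 P1 P2 (expected_dim d1 d2 d12 m1 m2)
         <= C / (#|F|%:R))%R.
Proof.
exists ((2 * (m1 + m2))%N%:R)%R, 0%N => F P1 P2 h1 h2 h12 _.
have M := main_count m1 m2 P1 P2; rewrite h1 h2 h12 in M.
rewrite /fail_prob.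
have qpos : (0 < #|F|)%N by apply/card_gt0P; exists 0%R.
have N1pos : (0 < #|[set X : 'M[F]_(m1, n) | (X <= P1)%MS]|)%N.
  by apply/card_gt0P; exists 0%R; rewrite inE sub0mx.
have N2pos : (0 < #|[set X : 'M[F]_(m2, n) | (X <= P2)%MS]|)%N.
  by apply/card_gt0P; exists 0%R; rewrite inE sub0mx.
rewrite ler_pdivrMr ?ltr0n ?muln_gt0 ?N1pos ?N2pos //.
rewrite mulrAC ler_pdivlMr ?ltr0n // -!natrM ler_nat.
exact: M.
Qed.
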